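(* Let $d=5$, let $0<\epsilon<\frac35$, and define $\mu(X)=w(|X|)$ for $X\in Q_5$, where $w(0)=\frac1{16}(1-\epsilon)+\frac38\epsilon$, $w(2)=\frac1{16}(1-\epsilon)$, $w(4)=\frac1{16}(1-\epsilon)+\frac18\epsilon$, and $w(1)=w(3)=w(5)=0$. Then $\mu$ is a probability distribution with $w_i^0=\frac12$ for all $i\in[5]$, and $\mu$ has no equilibrium: for every $X\in Q_5$ there is $Y\in Q_5$ with $P_1(X,Y)<\frac12$.
   Context: $Q_d=\{0,1\}^d$ with the Hamming distance $d(X,Y)=|\{i: x_i\neq y_i\}|$; $|X|$ is the number of coordinates equal to $1$. For a probability distribution $\mu$ on $Q_d$ (extended additively to subsets), and $A,B\in Q_d$, let $V(A,B)=\{Z: d(Z,A)<d(Z,B)\}$, $T(A,B)=\{Z: d(Z,A)=d(Z,B)\}$, $P_1(A,B)=\mu(V(A,B))+\frac12\mu(T(A,B))$, $P_2(A,B)=\mu(V(B,A))+\frac12\mu(T(A,B))$. $(A,B)$ is an equilibrium if $P_1(A,B)\ge P_1(A',B)$ for all $A'$ and $P_2(A,B)\ge P_2(A,B')$ for all $B'$. $w_i^0=\mu(\{Z: z_i=0\})$. *)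

(* Defs.v *)
From mathcomp Require Import all_boot all_order all_algebra.
Set Implicit Arguments. Unset Strict Implicit. Unset Printing Implicit Defensive.
Import Order.TTheory GRing.Theory Num.Theory.
Local Open Scope ring_scope.

(* The hypercube Q_d = {0,1}^d, coordinates indexed by 'I_d (true = 1). *)
Definition Q (d : nat) := {ffun 'I_d -> bool}.

Definition hdist d (X Y : Q d) : nat := #|[set i | X i != Y i]|.
Definition hweight d (X : Q d) : nat := #|[set i | X i]|.

Section Game.
Variables (R : realFieldType) (d : nat).
Implicit Types (mu : Q d -> R) (A B : Q d).

Definition muS mu (S : pred (Q d)) : R := \sum_(Z : Q d | S Z) mu Z.

Definition is_prob mu : Prop := (forall X, 0 <= mu X) /\ \sum_(X : Q d) mu X = 1.

Definition Vor A B : pred (Q d) := fun Z => (hdist Z A < hdist Z B)%N.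
Definition Tie A B : pred (Q d) := fun Z => hdist Z A == hdist Z B.

Definition P1 mu A B : R := muS mu (Vor A B) + muS mu (Tie A B) / 2.
Definition P2 mu A B : R := muS mu (Vor B A) + muS mu (Tie A B) / 2.

Definition equilibrium mu A B : Prop :=
  (forall A', P1 mu A' B <= P1 mu A B) /\ (forall B', P2 mu A B' <= P2 mu A B).

Definition w0 mu (i : 'I_d) : R := muS mu (fun Z => ~~ Z i).
End Game.

Definition w5 (R : realFieldType) (eps : R) (k : nat) : R :=
  match k with
  | 0 => (1 - eps) / 16 + 3 * eps / 8
  | 2 => (1 - eps) / 16
  | 4 => (1 - eps) / 16 + eps / 8
  | _ => 0
  end.

Definition mu5 (R : realFieldType) (eps : R) (X : Q 5) : R := w5 eps (hweight X).

(* Main.v *)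
Require Import Defs.
From mathcomp Require Import all_boot all_order all_algebra.
From mathcomp Require Import ring lra.
Set Implicit Arguments. Unset Strict Implicit. Unset Printing Implicit Defensive.
Import Order.TTheory GRing.Theory Num.Theory.

Definition B5 := (bool * bool * bool * bool * bool)%type.
Definition lst (b : B5) : seq bool := let: (b0,b1,b2,b3,b4) := b in [:: b0;b1;b2;b3;b4].
Definition bit (b : B5) (i : nat) : bool := nth false (lst b) i.
Definition mk (b : B5) : Q 5 := [ffun i : 'I_5 => bit b i].
Definition unmk (X : Q 5) : B5 :=
  (X (inord 0), X (inord 1), X (inord 2), X (inord 3), X (inord 4)).
Definition wtB (b : B5) : nat := bit b 0 + bit b 1 + bit b 2 + bit b 3 + bit b 4.
Definition hdB (a b : B5) : nat :=
  (bit a 0 != bit b 0) + (bit a 1 != bit b 1) + (bit a 2 != bit b 2)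
  + (bit a 3 != bit b 3) + (bit a 4 != bit b 4).

Lemma card_exp (P : pred 'I_5) : #|[set i | P i]| =
  P (inord 0) + P (inord 1) + P (inord 2) + P (inord 3) + P (inord 4).
Proof.
rewrite cardsE -sum1_card big_mkcond /=.
rewrite !big_ord_recl big_ord0 /= addn0 !addnA.
have E : forall k (H : (k < 5)%N), Ordinal H = inord k by move=> k H; apply: val_inj; rewrite /= inordK.
congr (_+_+_+_+_); rewrite -topredE /=; congr (nat_of_bool (P _)); apply: val_inj; by rewrite /= inordK.
Qed.

Lemma mkE b (k : nat) (H : (k < 5)%N) : mk b (inord k) = bit b k.
Proof. by rewrite ffunE inordK. Qed.

Lemma hdist_mk a b : hdist (mk a) (mk b) = hdB a b.
Proof. by rewrite /hdist card_exp !mkE. Qed.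

Lemma hweight_mk a : hweight (mk a) = wtB a.
Proof. by rewrite /hweight card_exp !mkE. Qed.

Lemma unmkK X : mk (unmk X) = X.
Proof.
apply/ffunP => i; rewrite ffunE.
case: i => [[|[|[|[|[|i]]]]] Hi] //=; congr (X _); apply: val_inj; by rewrite /= inordK.
Qed.

Lemma mkK b : unmk (mk b) = b.
Proof. by case: b => [[[[b0 b1] b2] b3] b4]; rewrite /unmk !mkE. Qed.

Lemma mk_inj : injective mk.
Proof. by move=> a b /(congr1 unmk); rewrite !mkK. Qed.

Definition allB5 : seq B5 := [::
  (false,false,false,false,false);
  (false,false,false,false,true);
  (false,false,false,true,false);
  (false,false,false,true,true);
  (false,false,true,false,false);
  (false,false,true,false,true);
  (false,false,true,true,false);
  (false,false,true,true,true);
  (false,true,false,false,false);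
  (false,true,false,false,true);
  (false,true,false,true,false);
  (false,true,false,true,true);
  (false,true,true,false,false);
  (false,true,true,false,true);
  (false,true,true,true,false);
  (false,true,true,true,true);
  (true,false,false,false,false);
  (true,false,false,false,true);
  (true,false,false,true,false);
  (true,false,false,true,true);
  (true,false,true,false,false);
  (true,false,true,false,true);
  (true,false,true,true,false);
  (true,false,true,true,true);
  (true,true,false,false,false);
  (true,true,false,false,true);
  (true,true,false,true,false);
  (true,true,false,true,true);
  (true,true,true,false,false);
  (true,true,true,false,true);
  (true,true,true,true,false);
  (true,true,true,true,true)].

Lemma mem_allB5 b : b \in allB5.
Proof. by case: b => [[[[[] []] []] []] []]. Qed.

Local Open Scope ring_scope.

Lemma sum_Q (R : nmodType) (F : Q 5 -> R) :
  \sum_(Z : Q 5) F Z = \sum_(b <- allB5) F (mk b).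
Proof.
rewrite -(big_map mk predT F); apply: perm_big.
apply: uniq_perm; first exact: index_enum_uniq.
  by rewrite (map_inj_uniq mk_inj).
move=> Z; rewrite mem_index_enum -(unmkK Z) map_f //; exact: mem_allB5.
Qed.

Definition Nk (f : B5 -> nat) (s : seq B5) k := sumn [seq f b | b <- s & wtB b == k].

Lemma cnt (R : realFieldType) (eps : R) f s :
  \sum_(b <- s) (f b)%:R * w5 eps (wtB b) =
  (Nk f s 0)%:R * w5 eps 0 + (Nk f s 2)%:R * w5 eps 2 + (Nk f s 4)%:R * w5 eps 4.
Proof.
rewrite /Nk; elim: s => [|b s IH]; first by rewrite big_nil /= !mul0r !addr0.
rewrite big_cons IH /=.
by case: (wtB b) => [|[|[|[|[|k]]]]] /=; rewrite ?natrD; ring.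
Qed.

Definition cB x y b : nat :=
  if (hdB b x < hdB b y)%N then 2 else if hdB b x == hdB b y then 1 else 0.

Lemma P1_mk (R : realFieldType) (eps : R) x y :
  P1 (mu5 eps) (mk x) (mk y) = (\sum_(b <- allB5) (cB x y b)%:R * w5 eps (wtB b)) / 2.
Proof.
rewrite /P1 /muS (big_mkcond (Vor _ _)) (big_mkcond (Tie _ _)) /= !sum_Q.
rewrite [X in _ + X]mulr_suml -big_split mulr_suml.
apply: eq_bigr => b _.
rewrite /Vor /Tie /mu5 !hdist_mk hweight_mk /cB.
case: ltngtP => H /=; lra.
Qed.

Definition goodN (n0 n2 n4 : nat) : bool :=
  ((n0 + n2 + n4 <= 16) && (5 * n0 + n4 < n2))%N ||
  ((n2 < 5 * n0 + n4) && (5 * (n0 + n2 + n4) + 3 * (5 * n0 + n4) <= 80 + 3 * n2))%N.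

Lemma key (R : realFieldType) (eps : R) n0 n2 n4 :
  0 < eps -> eps < 3 / 5 -> goodN n0 n2 n4 ->
  (n0%:R * w5 eps 0 + n2%:R * w5 eps 2 + n4%:R * w5 eps 4) / 2 < 1 / 2.
Proof.
rewrite /w5; move=> e0 e1 /orP [/andP [h1 h2] | /andP [h1 h2]].
- move: h1 h2; rewrite -(ltr_nat R) -(ler_nat R) !natrD => h1 h2.
  have p : 0 < eps * (n2%:R - (5%:R * n0%:R + n4%:R)) by apply: mulr_gt0; lra.
  nra.
- move: h1 h2; rewrite -(ltr_nat R) -(ler_nat R) !natrD => h1 h2.
  have p : 0 < (3/5 - eps) * ((5%:R * n0%:R + n4%:R) - n2%:R) by apply: mulr_gt0; lra.
  nra.
Qed.

Definition good x y := goodN (Nk (cB x y) allB5 0) (Nk (cB x y) allB5 2) (Nk (cB x y) allB5 4).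

Lemma all_good : all (fun x => has (good x) allB5) allB5.
Proof. by vm_compute. Qed.

Section Gen.
Variables (R : realFieldType) (d : nat) (mu : Q d -> R).

Lemma P1_self B : is_prob mu -> P1 mu B B = 1 / 2.
Proof.
move=> [_ s1]; rewrite /P1 /muS /Vor /Tie.
rewrite big_pred0 => [|Z]; last by rewrite /= ltnn.
rewrite (eq_bigl (fun _ => true)) => [|Z]; last by rewrite /= eqxx.
by rewrite s1 add0r.
Qed.

Lemma P2_self A : is_prob mu -> P2 mu A A = 1 / 2.
Proof.
move=> [_ s1]; rewrite /P2 /muS /Vor /Tie.
rewrite big_pred0 => [|Z]; last by rewrite /= ltnn.
rewrite (eq_bigl (fun _ => true)) => [|Z]; last by rewrite /= eqxx.
by rewrite s1 add0r.
Qed.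

Lemma P1P2 A B : is_prob mu -> P1 mu A B + P2 mu A B = 1.
Proof.
move=> [_ s1]; rewrite -s1 /P1 /P2 /muS.
have -> : forall a b c : R, a + c / 2 + (b + c / 2) = a + b + c by move=> a b c; field.
rewrite !(big_mkcond (Vor _ _)) (big_mkcond (Tie _ _)) -!big_split /=.
apply: eq_bigr => Z _; rewrite /Vor /Tie.
by case: ltngtP => _; rewrite ?addr0 ?add0r.
Qed.
End Gen.

Theorem mainTheorem9 (R : realFieldType) (eps : R) :
  0 < eps -> eps < 3 / 5 ->
  [/\ is_prob (mu5 eps),
      (forall i : 'I_5, w0 (mu5 eps) i = 1 / 2),
      ~ (exists A B : Q 5, equilibrium (mu5 eps) A B) &
      (forall X : Q 5, exists Y : Q 5, P1 (mu5 eps) X Y < 1 / 2)].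
Proof.
move=> e0 e1.
have P4 : forall X : Q 5, exists Y : Q 5, P1 (mu5 eps) X Y < 1 / 2.
  move=> X; rewrite -(unmkK X).
  have /allP /(_ (unmk X) (mem_allB5 _)) /hasP [y _ g] := all_good.
  by exists (mk y); rewrite P1_mk cnt; apply: key.
have Pr : is_prob (mu5 eps).
  split.
    move=> X; rewrite /mu5; case: (hweight X) => [|[|[|[|[|k]]]]] /=; lra.
  rewrite sum_Q (eq_bigr (fun b => (1%N)%:R * w5 eps (wtB b))) => [|b _]; last first.
    by rewrite /mu5 hweight_mk mul1r.
  rewrite cnt /Nk /= /w5; lra.
split => //.
- move=> i; rewrite /w0 /muS big_mkcond sum_Q /=.
  rewrite (eq_bigr (fun b => (~~ bit b i : nat)%:R * w5 eps (wtB b))) => [|b _]; last first.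
    by rewrite ffunE /mu5 hweight_mk; case: (bit b i); rewrite ?mul1r ?mul0r.
  rewrite cnt.
  by case: i => [[|[|[|[|[|i]]]]] Hi] //=; rewrite /Nk /= /w5; lra.
- move=> [A [B [h1 h2]]].
  have [Y hY] := P4 A.
  have a1 := h1 B; have a2 := h2 Y.
  rewrite P1_self // in a1.
  have b1 := P1P2 A B Pr; have b2 := P1P2 A Y Pr.
  lra.
Qed.
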